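(* There is no binary self-orthogonal $[110,7,54]$ code.
   Context: A binary linear code $C$ is self-orthogonal if $C\subseteq C^\perp$. *)

(* Defs.v *)
From HB Require Import structures.
From mathcomp Require Import all_boot all_order all_algebra.
Set Implicit Arguments. Unset Strict Implicit. Unset Printing Implicit Defensive.
Import GRing.Theory.
Local Open Scope ring_scope.


Definition hwt (n : nat) (x : 'rV['F_2]_n) : nat := #|[set i | x 0 i != 0]|.
Definition hdist (n : nat) (x y : 'rV['F_2]_n) : nat := #|[set i | x 0 i != y 0 i]|.

Definition bdot (n : nat) (x y : 'rV['F_2]_n) : 'F_2 := \sum_(i < n) x 0 i * y 0 i.

Definition dual_code (n : nat) (C : {vspace 'rV['F_2]_n}) : pred 'rV['F_2]_n :=
  fun x => [forall c : 'rV['F_2]_n, (c \in C) ==> (bdot x c == 0)].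

Definition self_orthogonal (n : nat) (C : {vspace 'rV['F_2]_n}) : Prop :=
  {subset C <= dual_code C}.

Definition min_distance_eq (n : nat) (C : {vspace 'rV['F_2]_n}) (d : nat) : Prop :=
  (exists x, exists y, [/\ x \in C, y \in C, x != y & hdist x y = d]) /\
  (forall x y, x \in C -> y \in C -> x != y -> (d <= hdist x y)%N).

Definition is_nkd_code (n k d : nat) (C : {vspace 'rV['F_2]_n}) : Prop :=
  \dim C = k /\ min_distance_eq C d.

(* Main.v *)
Require Import Defs.
From mathcomp Require Import all_boot all_order all_algebra.
From mathcomp Require Import all_field zify.
Import GRing.Theory.
Set Implicit Arguments. Unset Strict Implicit.

Lemma F2cases (a : 'F_2) : a = 0%R \/ a = 1%R.
Proof. case: a => [[|[|k]] //= H]; [left|right]; exact: val_inj. Qed.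

Lemma F2_11 : (1 + 1 : 'F_2)%R = 0%R. Proof. exact: val_inj. Qed.
Lemma F2_10 : (1 : 'F_2)%R != 0%R. Proof. by []. Qed.
Ltac f2s := rewrite ?mul0r ?mul1r ?mulr0 ?mulr1 ?add0r ?addr0 ?F2_11 ?eqxx ?F2_10 //=.

Definition inter (n : nat) (x y : 'rV['F_2]_n) : nat :=
  #|[set i | (x 0%R i * y 0%R i)%R != 0%R]|.

Lemma card_sum (n : nat) (P : pred 'I_n) :
  #|[set i | P i]| = \sum_i (P i : nat).
Proof.
rewrite -sum1_card big_mkcond /=; apply: eq_bigr => i _.
by rewrite inE; case: (P i).
Qed.

Lemma hwtD (n : nat) (x y : 'rV['F_2]_n) :
  hwt (x + y)%R + 2 * inter x y = hwt x + hwt y.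
Proof.
rewrite /hwt /inter !card_sum big_distrr -!big_split /=.
apply: eq_bigr => i _; rewrite mxE.
by case: (F2cases (x 0%R i)) => ->; case: (F2cases (y 0%R i)) => ->; f2s.
Qed.

Lemma bdotE (n : nat) (x y : 'rV['F_2]_n) : bdot x y = ((inter x y)%:R)%R.
Proof.
rewrite /bdot /inter card_sum natr_sum; apply: eq_bigr => i _.
by case: (F2cases (x 0%R i)) => ->; case: (F2cases (y 0%R i)) => ->; f2s.
Qed.

Lemma F2nat0 (m : nat) : ((m%:R)%R : 'F_2) = 0%R -> 2 %| m.
Proof.
have := Zp_nat_mod (p := 2) (isT : 1 < 2) m.
rewrite /dvdn.
have : m %% 2 < 2 by rewrite ltn_pmod.
case: (m %% 2) => [|[|k]] //= _ <- //.
Qed.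

Lemma inter_self (n : nat) (x : 'rV['F_2]_n) : inter x x = hwt x.
Proof.
rewrite /hwt /inter !card_sum; apply: eq_bigr => i _.
by case: (F2cases (x 0%R i)) => ->; f2s.
Qed.

Theorem proposition6p5 :
  ~ exists C : {vspace 'rV['F_2]_110}, @is_nkd_code 110 7 54 C /\ self_orthogonal C.
Proof.
move=> [C [[dimC [_ mind]] so]].
have cardC : #|C| = 128 by rewrite (card_vspace C) dimC card_Fp.
have wt_ge x : x \in C -> x != 0%R -> 54 <= hwt x.
  move=> Hx Hx0; have := mind x 0%R Hx (mem0v C) Hx0.
  suff -> : hdist x 0%R = hwt x by [].
  by rewrite /hdist /hwt; apply: eq_card => i; rewrite !inE mxE.
have orth x y : x \in C -> y \in C -> 2 %| inter x y.
  move=> Hx Hy; have := so x Hx; rewrite /dual_code unfold_in.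
  move/forallP/(_ y)/implyP/(_ Hy)/eqP; rewrite bdotE; exact: F2nat0.
have even x : x \in C -> 2 %| hwt x by move=> Hx; rewrite -inter_self; exact: orth.
pose D := [set x | (x \in C) && (4 %| hwt x)].
pose E := [set x | (x \in C) && ~~ (4 %| hwt x)].
have addD x y : x \in D -> y \in D -> (x + y)%R \in D.
  rewrite !inE => /andP [Hx Dx] /andP [Hy Dy]; rewrite memvD //=.
  have := hwtD x y; have := orth x y Hx Hy; move: Dx Dy; move: (hwt x) (hwt y) (hwt (x + y)%R) (inter x y) => a b c d. lia.
have addE x y : x \in E -> y \in E -> (x + y)%R \in D.
  rewrite !inE => /andP [Hx Dx] /andP [Hy Dy]; rewrite memvD //=.
  have := hwtD x y; have := orth x y Hx Hy; have := even x Hx; have := even y Hy; move: Dx Dy; move: (hwt x) (hwt y) (hwt (x + y)%R) (inter x y) => a b c d; lia.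
have cDE : #|D| + #|E| = 128.
  rewrite -cardC -(cardID [pred x | 4 %| hwt x] C); congr (_ + _); apply: eq_card => x;
  by rewrite !inE // andbC.
have EleD : #|E| <= #|D|.
  case: (set_0Vmem E) => [->|[z Hz]]; first by rewrite cards0.
  rewrite -(card_imset E (addIr z)); apply: subset_leq_card.
  by apply/subsetP => _ /imsetP [w Hw ->]; exact: addE.
have D0 : (0 : 'rV['F_2]_110)%R \in D.
  rewrite inE mem0v /=.
  suff -> : hwt (0 : 'rV['F_2]_110)%R = 0 by [].
  by rewrite /hwt; apply/eqP; rewrite cards_eq0; apply/eqP/setP => i; rewrite !inE mxE.
have up : 2 * \sum_(x in D) hwt x <= 110 * #|D|.
  have -> : \sum_(x in D) hwt x = \sum_i #|[set x in D | x 0%R i != 0%R]|.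
    under eq_bigr => x _ do rewrite /hwt card_sum.
    rewrite exchange_big /=; apply: eq_bigr => i _.
    rewrite -sum1_card big_mkcond [in RHS]big_mkcond /=; apply: eq_bigr => x _;
       by rewrite !inE; case: ((x \in C) && (4 %| hwt x)); case: (x 0%R i != 0%R).
  rewrite big_distrr /=.
  have -> : 110 * #|D| = \sum_(i < 110) #|D| by rewrite sum_nat_const card_ord.
  apply: leq_sum => i _.
  set D1 := [set x in D | x 0%R i != 0%R].
  have hD1 : D1 \subset D by apply/subsetP => x; rewrite inE => /andP [].
  have := cardsID D1 D; rewrite (setIidPr hD1) => <-.
  suff : #|D1| <= #|D :\: D1| by rewrite mul2n -addnn leq_add2l.
  case: (set_0Vmem D1) => [->|[y Hy]]; first by rewrite cards0.
  rewrite -(card_imset D1 (addIr y)); apply: subset_leq_card.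
  apply/subsetP => _ /imsetP [w Hw ->].
  move: Hw Hy; rewrite [w \in D1]inE [y \in D1]inE => /andP [Dw w1] /andP [Dy y1].
  rewrite in_setD addD // andbT [_ \in D1]inE addD //= mxE negbK.
  by case: (F2cases (w 0%R i)) w1 => -> //; case: (F2cases (y 0%R i)) y1 => -> //; f2s.
have low : 56 * (#|D| - 1) <= \sum_(x in D) hwt x.
  rewrite (bigD1 0%R) //=.
  have -> : #|D| - 1 = #|[set x in D | x != 0%R]|.
    rewrite (cardsD1 0%R D) D0 /= add1n subSS subn0.
    by apply: eq_card => x; rewrite !inE andbC.
  rewrite -sum1_card big_distrr /= muln1.
  apply: leq_trans (leq_addl _ _).
  rewrite [X in _ <= X]big_mkcond [X in X <= _]big_mkcond /=.
  apply: leq_sum => x _.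
  rewrite in_set; case HD: (x \in D); case Hx0: (x != 0%R) => //=.
  move: HD; rewrite inE => /andP [HC H4].
  have := wt_ge x HC Hx0; move: H4; move: (hwt x) => a; lia.
move: cDE EleD up low; move: (#|D|) (#|E|) (\sum_(x in D) hwt x) => a b s; lia.
Qed.
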